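(* Let $G$ be a normed group with a separately continuous and transitive Nikodym action on a non-meagre metric space $X$. Then for every $x\in X$ and every closed nowhere dense $F\subseteq X$, the set $W_{x,F}=\{\alpha\in G:\alpha(x)\notin F\}$ is dense and open in $G$. In particular, $G$ separates points from nowhere dense closed sets.
   Context: A normed group is a group with a group-norm $\|\cdot\|$ (subadditive, $\|t\|>0$ for $t\ne e_G$, $\|e_G\|=0$, $\|t^{-1}\|=\|t\|$), topologized by $d_R(s,t)=\|st^{-1}\|$. A separately continuous action $\varphi:G\times X\to X$ ($\varphi(e_G,x)=x$, $\varphi(gh,x)=\varphi(g,\varphi(h,x))$, write $g(x)=\varphi(g,x)$) has $x\mapsto g(x)$ continuous for each $g$ and $\varphi_x:g\mapsto g(x)$ continuous for each $x$; transitive means for all $x,y$ some $g$ has $g(x)=y$. Nikodym action: for every non-empty open neighbourhood $U$ of $e_G$ and every $x$, $Ux=\{u(x):u\in U\}$ contains a non-meagre set with the Baire property. *)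

(* Defs.v *)
From HB Require Import structures.
From mathcomp Require Import all_boot all_order all_algebra.
From mathcomp Require Import all_classical all_reals all_analysis.
Set Implicit Arguments. Unset Strict Implicit. Unset Printing Implicit Defensive.
Import Order.TTheory GRing.Theory Num.Theory.
Local Open Scope classical_set_scope.
Local Open Scope ring_scope.

Record normedGroup (R : realType) := NormedGroup {
  ng_car :> Type;
  ng_mul : ng_car -> ng_car -> ng_car;
  ng_inv : ng_car -> ng_car;
  ng_one : ng_car;
  ng_norm : ng_car -> R;
  ng_mulA : forall a b c, ng_mul a (ng_mul b c) = ng_mul (ng_mul a b) c;
  ng_mul1g : forall a, ng_mul ng_one a = a;
  ng_mulVg : forall a, ng_mul (ng_inv a) a = ng_one;
  ng_norm1 : ng_norm ng_one = 0;
  ng_norm_gt0 : forall t, t <> ng_one -> 0 < ng_norm t;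
  ng_normV : forall t, ng_norm (ng_inv t) = ng_norm t;
  ng_normM : forall s t, ng_norm (ng_mul s t) <= ng_norm s + ng_norm t
}.

Section NormedGroupTopology.
Variables (R : realType) (G : normedGroup R).

Definition dR (s t : G) : R := ng_norm (ng_mul s (ng_inv t)).

Definition G_open (U : set G) : Prop :=
  forall s, U s -> exists2 r : R, 0 < r & forall t, dR s t < r -> U t.

Definition G_dense (W : set G) : Prop :=
  forall U : set G, G_open U -> U !=set0 -> (U `&` W) !=set0.

Definition G_continuous (T : topologicalType) (f : G -> T) : Prop :=
  forall g (V : set T), nbhs (f g) V ->
    exists2 r : R, 0 < r & forall h, dR g h < r -> V (f h).
End NormedGroupTopology.

Section Category.
Variable T : topologicalType.

Definition nowhere_dense (A : set T) : Prop := (closure A)^° = set0.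

Definition meagre (A : set T) : Prop :=
  exists N : nat -> set T, (forall n, nowhere_dense (N n)) /\
    A `<=` \bigcup_n N n.

Definition baire_property (A : set T) : Prop :=
  exists2 U : set T, open U & meagre ((A `\` U) `|` (U `\` A)).
End Category.

Section Actions.
Variables (R : realType) (G : normedGroup R) (X : topologicalType).

Definition group_action (phi : G -> X -> X) : Prop :=
  (forall x, phi (ng_one G) x = x) /\
  (forall g h x, phi (ng_mul g h) x = phi g (phi h x)).

Definition separately_continuous (phi : G -> X -> X) : Prop :=
  (forall g, continuous (phi g)) /\
  (forall x, G_continuous (fun g => phi g x)).

Definition transitive_action (phi : G -> X -> X) : Prop :=
  forall x y, exists g, phi g x = y.

Definition nikodym_action (phi : G -> X -> X) : Prop :=
  forall U : set G, G_open U -> U (ng_one G) ->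
    forall x, exists2 A : set X, A `<=` [set phi u x | u in U] &
      ~ meagre A /\ baire_property A.
End Actions.

(* Main.v *)
Require Import Defs.
From HB Require Import structures.
From mathcomp Require Import all_boot all_order all_algebra.
From mathcomp Require Import all_classical all_reals all_analysis.
Import Order.TTheory GRing.Theory Num.Theory.
Local Open Scope classical_set_scope.
Local Open Scope ring_scope.

Section GroupLemmas.
Variables (R : realType) (G : normedGroup R).
Local Notation "a * b" := (ng_mul a b).
Local Notation "a ^-1" := (ng_inv a).
Local Notation one := (ng_one G).

Lemma g_mulgV (a : G) : a * a^-1 = one.
Proof.
rewrite -[a * a^-1]ng_mul1g -[in X in X * _ = _](ng_mulVg (a^-1)).
by rewrite -ng_mulA [_ * (a * _)]ng_mulA ng_mulVg ng_mul1g ng_mulVg.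
Qed.

Lemma g_mulg1 (a : G) : a * one = a.
Proof. by rewrite -(ng_mulVg a) ng_mulA g_mulgV ng_mul1g. Qed.

Lemma g_invM (t s : G) : (t * s)^-1 = s^-1 * t^-1.
Proof.
have h : (t * s) * (s^-1 * t^-1) = one.
  by rewrite -ng_mulA [s * (s^-1 * _)]ng_mulA g_mulgV ng_mul1g g_mulgV.
by rewrite -[LHS]g_mulg1 -h ng_mulA ng_mulVg ng_mul1g.
Qed.

Lemma dR_mulr (u t s : G) : dR (u * s) (t * s) = dR u t.
Proof.
by rewrite /dR g_invM -ng_mulA [s * (s^-1 * _)]ng_mulA g_mulgV ng_mul1g.
Qed.
End GroupLemmas.

Theorem mainTheorem10 (R : realType) (G : normedGroup R)
  (X : pseudoMetricType R) (hX : hausdorff_space X) (phi : G -> X -> X) :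
  group_action phi ->
  separately_continuous phi ->
  transitive_action phi ->
  nikodym_action phi ->
  ~ meagre [set: X] ->
  forall (x : X) (F : set X), closed F -> nowhere_dense F ->
    G_dense [set a : G | ~ F (phi a x)] /\ G_open [set a : G | ~ F (phi a x)].
Proof.
move=> [_ hM] [_ hC] _ hN _ x F cF nF; split.
- move=> U oU [s Us]; apply: contrapT => hno.
  have inF : forall a, U a -> F (phi a x).
    move=> a Ua; apply: contrapT => nFa; apply: hno; by exists a.
  pose V := [set u : G | U (ng_mul u s)].
  have oV : G_open V.
    move=> u Vu; have [r r0 hr] := oU _ Vu.
    exists r => // t ht; apply: hr; by rewrite /V /= dR_mulr.
  have V1 : V (ng_one G) by rewrite /V /= ng_mul1g.
  have [A hA [nmA _]] := hN V oV V1 (phi s x).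
  apply: nmA; exists (fun _ => F); split => // y Ay.
  exists 0%N => //; have [u Vu <-] := hA y Ay.
  by rewrite -hM; apply: inF.
- move=> g /= nFg; have := hC x g (~` F).
  case.
    by apply: open_nbhs_nbhs; split => //; apply: closed_openC.
  move=> r r0 hr; exists r => // h /hr; done.
Qed.
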